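(* Let $m_0 = 1$ if $d = 1$ and $m_0 = \frac32$ if $d \geq 2$. For all real $s \geq 0$ and all zero-mean $u \in H^s_0(\mathbb{T}^d,\mathbb{C}) \cap H^{m_0}_0(\mathbb{T}^d,\mathbb{C})$, with $v := \overline{u}$, the vector field $W_5(u,v) = ((W_5)_1(u,v), (W_5)_2(u,v))$ defined below satisfies \[ \|(W_5)_1(u,v)\|_s + \|(W_5)_2(u,v)\|_s \leq C\, \|u\|_{m_0}^4 \|u\|_s, \] where $C$ is a universal constant.
   Context: $\mathbb{T}^d = (\mathbb{R}/2\pi\mathbb{Z})^d$. Zero-mean functions are written $u = \sum_{j\in\mathbb{Z}^d\setminus\{0\}} u_j e^{ij\cdot x}$, $\|u\|_s^2 := \sum_{j\neq0}|u_j|^2|j|^{2s}$, and $H^s_0(\mathbb{T}^d,\mathbb{C})$ is the space of zero-mean $u$ with $\|u\|_s<\infty$; $|\cdot|$ is the Euclidean norm. $\delta_a^b = 1$ if $a=b$ and $0$ otherwise; a quotient of the form $(1-\delta_a^b)/(a-b)$ is defined to be $0$ when $a=b$. All sums run over $j,\ell,k \in \mathbb{Z}^d\setminus\{0\}$ subject to the indicated constraints. For complex-conjugate pairs $(u,v)$, $v=\overline u$ (so $v_j = \overline{u_{-j}}$), \[ (W_5)_1(u,v) = \tfrac{i}{32}\!\!\sum_{|j|=|\ell|}\!\! u_ju_{-j}v_\ell v_{-\ell}u_k e^{ik\cdot x}|j|^2|\ell|^2\Big(\tfrac{1}{|j|+|k|} - \tfrac{1-\delta_{|\ell|}^{|k|}}{|\ell|-|k|}\Big)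 + \tfrac{3i}{32}\!\!\sum_{|k|=|j|+|\ell|}\!\! u_ju_{-j}u_\ell u_{-\ell}v_k e^{ik\cdot x}|j||\ell||k| \] \[ + \tfrac{i}{16}\!\!\sum_{|j|=|k|}\!\! u_ju_{-j}u_\ell v_{-\ell}v_k e^{ik\cdot x}|j|^2|\ell|\Big(6 + \tfrac{|\ell|}{|\ell|+|j|} + \tfrac{|\ell|(1-\delta_{|\ell|}^{|j|})}{|\ell|-|j|}\Big) + \tfrac{3i}{16}\!\!\sum_{|k|=|j|-|\ell|}\!\! u_ju_{-j}v_\ell v_{-\ell}v_k e^{ik\cdot x}|j||\ell||k|, \] and $(W_5)_2(u,v)$ is obtained from $(W_5)_1(u,v)$ by exchanging the roles of $u$ and $v$ everywhere and multiplying by $-1$ (equivalently, $(W_5)_2(u,\overline u) = \overline{(W_5)_1(u,\overline u)}$). *)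

(* Defs.v *)
From HB Require Import structures.
From mathcomp Require Import all_boot all_order all_algebra.
From mathcomp Require Import complex.
From mathcomp Require Import all_classical all_reals all_analysis.
Set Implicit Arguments. Unset Strict Implicit. Unset Printing Implicit Defensive.
Import Order.TTheory GRing.Theory Num.Theory ComplexField.

Local Open Scope classical_set_scope.
Local Open Scope ring_scope.
Local Open Scope complex_scope.

Section Defs.
Variable R : realType.

(* Fourier indices j ∈ Z^d, as integer row vectors. *)
Definition idx (d : nat) := 'rV[int]_d.

Definition inorm d (j : idx d) : R :=
  Num.sqrt (\sum_(i < d) ((j ord0 i)%:~R : R) ^+ 2).

(* A (zero-mean) function on T^d is represented by its Fourier coefficient
   family u : Z^d -> C (u j = u_j). *)
Definition fcoef d := idx d -> R[i].

Definition Hnorm2 d (s : R) (u : fcoef d) : \bar R :=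
  (\esum_(j in [set j : idx d | (j != 0)%R]) ((ComplexField.Normc.normc (u j)) ^+ 2 * (inorm j) `^ (2 * s))%:E)%E.

(* ||u||_s  (= +oo iff u is not in H^s). *)
Definition Hnorm d (s : R) (u : fcoef d) : \bar R :=
  match Hnorm2 s u with
  | EFin r => (Num.sqrt r)%:E
  | _ => +oo%E
  end.

(* Unordered sum over a set D of a complex family; it is the genuine
   (absolutely convergent) sum whenever the family is absolutely summable. *)
Definition rsum (T : choiceType) (D : set T) (f : T -> R) : R :=
  fine (\esum_(x in D) (Num.max (f x) 0)%:E)%E - fine (\esum_(x in D) (Num.max (- f x) 0)%:E)%E.

Definition csum (T : choiceType) (D : set T) (f : T -> R[i]) : R[i] :=
  (rsum D (fun x => complex.Re (f x)))%:C + 'i * (rsum D (fun x => complex.Im (f x)))%:C.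

(* (1 - δ_a^b)/(a - b), defined to be 0 when a = b. *)
Definition qd (a b : R) : R := if a == b then 0 else 1 / (a - b).

Definition W51 d (u v : fcoef d) (k : idx d) : R[i] :=
  if k == 0 then 0 else
  let n := @inorm d in
  let C (r : R) : R[i] := r%:C in
  let P (c : idx d -> idx d -> Prop) :=
      [set p : idx d * idx d | p.1 != 0 /\ p.2 != 0 /\ c p.1 p.2] in
    'i / 32%:R * csum (P (fun j l => n j = n l))
      (fun p => let j := p.1 in let l := p.2 in
        u j * u (- j) * v l * v (- l) * u k
        * C (n j ^+ 2 * n l ^+ 2 * (1 / (n j + n k) - qd (n l) (n k))))
  + 3%:R * 'i / 32%:R * csum (P (fun j l => n k = n j + n l))
      (fun p => let j := p.1 in let l := p.2 in
        u j * u (- j) * u l * u (- l) * v k * C (n j * n l * n k))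
  + 'i / 16%:R * csum (P (fun j l => n j = n k))
      (fun p => let j := p.1 in let l := p.2 in
        u j * u (- j) * u l * v (- l) * v k
        * C (n j ^+ 2 * n l * (6%:R + n l / (n l + n j) + n l * qd (n l) (n j))))
  + 3%:R * 'i / 16%:R * csum (P (fun j l => n k = n j - n l))
      (fun p => let j := p.1 in let l := p.2 in
        u j * u (- j) * v l * v (- l) * v k * C (n j * n l * n k)).

Definition W52 d (u v : fcoef d) (k : idx d) : R[i] := - W51 v u k.

(* v = conj u, i.e. v_j = conj (u_{-j}). *)
Definition cconj d (u : fcoef d) : fcoef d := fun j => conjc (u (- j)).

Definition m0 (d : nat) : R := if d == 1%N then 1 else 3%:R / 2%:R.

End Defs.

(* Main.v *)
Require Import Defs.
From HB Require Import structures.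
From mathcomp Require Import all_boot all_order all_algebra.
From mathcomp Require Import complex.
From mathcomp Require Import all_classical all_reals all_analysis.
Import Order.TTheory GRing.Theory Num.Theory ComplexField.
Local Open Scope ring_scope.
From mathcomp Require Import zify lra ring.
Local Open Scope complex_scope.

Notation nc := Normc.normc.

Lemma nc_ge0 (R : realType) (z : R[i]) : 0 <= nc z.
Proof. by case: z => a b; rewrite /Normc.normc sqrtr_ge0. Qed.

Lemma nc_real (R : realType) (r : R) : nc (r%:C) = `|r|.
Proof. by rewrite /Normc.normc /= expr0n /= addr0 sqrtr_sqr. Qed.

Lemma nc_i (R : realType) : nc ('i : R[i]) = 1.
Proof. by rewrite /Normc.normc /= expr0n /= add0r expr1n sqrtr1. Qed.

Lemma nc_conj (R : realType) (z : R[i]) : nc (conjc z) = nc z.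
Proof. by case: z => a b; rewrite /Normc.normc /= sqrrN. Qed.

Lemma nc_Re (R : realType) (z : R[i]) : `|complex.Re z| <= nc z.
Proof.
case: z => a b; rewrite /Normc.normc /= -(sqrtr_sqr a) ler_sqrt ?addr_ge0 ?sqr_ge0 //.
by rewrite lerDl sqr_ge0.
Qed.

Lemma nc_Im (R : realType) (z : R[i]) : `|complex.Im z| <= nc z.
Proof.
case: z => a b; rewrite /Normc.normc /= -(sqrtr_sqr b) ler_sqrt ?addr_ge0 ?sqr_ge0 //.
by rewrite lerDr sqr_ge0.
Qed.

Lemma esum_subset_le (R : realType) (T : choiceType) (A B : set T) (f : T -> \bar R) :
  (A `<=` B)%classic -> (forall x, B x -> (0 <= f x)%E) ->
  (\esum_(x in A) f x <= \esum_(x in B) f x)%E.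
Proof.
move=> AB f0; rewrite (esum_mkcond A) (esum_mkcond B); apply: le_esum => x _.
case: ifPn => xA; first by rewrite ifT // inE; apply: AB; rewrite -inE.
by case: ifPn => // /[!inE] /f0.
Qed.

Lemma esumZ_le (R : realType) (T : choiceType) (D : set T) (c : R) (a : T -> \bar R) :
  0 <= c -> (forall x, (0 <= a x)%E) ->
  (\esum_(x in D) (c%:E * a x) <= c%:E * \esum_(x in D) a x)%E.
Proof.
move=> c0 a0; apply: ge_ereal_sup => _ [X [finX XD]] <-.
rewrite -ge0_mule_fsumr // lee_wpmul2l ?lee_fin //.
by apply: ereal_sup_ubound; exists X.
Qed.
Arguments esumZ_le {R T} D {c a}.

Lemma esum_prod_le (R : realType) (T : choiceType) (A B : set T) (g h : T -> R) (c Mg Mh : R) :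
  0 <= c -> (forall x, 0 <= g x) -> (forall x, 0 <= h x) ->
  (\esum_(x in A) (g x)%:E <= Mg%:E)%E -> (\esum_(x in B) (h x)%:E <= Mh%:E)%E ->
  (\esum_(p in (A `*` B)%classic) (c * g p.1 * h p.2)%:E <= (c * Mg * Mh)%:E)%E.
Proof.
move=> c0 g0 h0 hg hh.
have Mh0 : 0 <= Mh.
  by rewrite -lee_fin; apply: le_trans hh; apply: esum_ge0 => x _; rewrite lee_fin.
rewrite -(esum_esum (I:=A) (J:=fun _ => B) (a:=fun i j => (c * g i * h j)%:E)); last first.
  by move=> i j _ _; rewrite lee_fin !mulr_ge0.
apply: (@le_trans _ _ (\esum_(i in A) ((c * Mh) * g i)%:E)%E).
  apply: le_esum => i _.
  apply: (@le_trans _ _ (\esum_(j in B) ((c * g i)%:E * (h j)%:E))%E).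
    by apply: le_esum => j _; rewrite -EFinM.
  have hz : forall x, (0 <= (h x)%:E)%E by move=> x; rewrite lee_fin.
  apply: (le_trans (esumZ_le B (mulr_ge0 c0 (g0 i)) hz)).
  by rewrite mulrAC [X in (_ <= X)%E]EFinM lee_wpmul2l // lee_fin mulr_ge0.
apply: (@le_trans _ _ (\esum_(i in A) ((c * Mh)%:E * (g i)%:E))%E).
  by apply: le_esum => j _; rewrite -EFinM.
have gz : forall x, (0 <= (g x)%:E)%E by move=> x; rewrite lee_fin.
apply: (le_trans (esumZ_le A (mulr_ge0 c0 Mh0) gz)).
by rewrite mulrAC [X in (_ <= X)%E]EFinM lee_wpmul2l // lee_fin mulr_ge0.
Qed.

Lemma fine_bnd (R : realType) (x : \bar R) (M : R) :
  (0 <= x)%E -> (x <= M%:E)%E -> 0 <= fine x <= M.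
Proof. by case: x => [r||] //=; rewrite !lee_fin => -> ->. Qed.

Lemma rsum_le (R : realType) (T : choiceType) (D : set T) (g : T -> R) (M : R) :
  (\esum_(x in D) (`|g x|)%:E <= M%:E)%E -> `|rsum D g| <= 2 * M.
Proof.
move=> H; rewrite /rsum.
have HA : 0 <= fine (\esum_(x in D) (Num.max (g x) 0)%:E)%E <= M.
  apply: fine_bnd; first by apply: esum_ge0 => x _; rewrite lee_fin le_max lexx orbT.
  apply: le_trans H; apply: le_esum => x _; rewrite lee_fin ge_max normr_ge0 ler_norm //.
have HB : 0 <= fine (\esum_(x in D) (Num.max (- g x) 0)%:E)%E <= M.
  apply: fine_bnd; first by apply: esum_ge0 => x _; rewrite lee_fin le_max lexx orbT.
  apply: le_trans H; apply: le_esum => x _; rewrite lee_fin ge_max normr_ge0 -normrN ler_norm //.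
move: HA HB; set a := fine _; set b := fine _ => /andP[a0 aM] /andP[b0 bM].
apply: (le_trans (ler_normB a b)); rewrite ger0_norm // ger0_norm //.
by rewrite mulr2n mulrDl mul1r lerD.
Qed.

Lemma csum_le (R : realType) (T : choiceType) (D : set T) (f : T -> R[i]) (M : R) :
  (\esum_(x in D) (nc (f x))%:E <= M%:E)%E -> nc (csum D f) <= 4 * M.
Proof.
move=> H; rewrite /csum.
have H1 : `|rsum D (fun x => complex.Re (f x))| <= 2 * M.
  by apply: rsum_le; apply: le_trans H; apply: le_esum => x _; rewrite lee_fin nc_Re.
have H2 : `|rsum D (fun x => complex.Im (f x))| <= 2 * M.
  by apply: rsum_le; apply: le_trans H; apply: le_esum => x _; rewrite lee_fin nc_Im.
apply: (le_trans (le_normcD _ _)).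
rewrite Normc.normcM nc_i mul1r !nc_real.
have -> : (4 : R) * M = 2 * M + 2 * M by rewrite -mulrDl -natrD.
exact: lerD.
Qed.

Lemma int_ge1 (z : int) : z != 0 -> 1 <= z * z.
Proof. move=> h; nia. Qed.

Lemma intr_absge1 (R : realType) (z : int) : z != 0 -> 1 <= `|z%:~R : R|.
Proof.
move=> h; rewrite -intr_norm; have : (1 <= `|z|)%R by lia.
by rewrite -(ler_int R).
Qed.

Lemma inorm_sq (R : realType) d (j : idx d) :
  inorm R j ^+ 2 = (\sum_(i < d) (j ord0 i * j ord0 i))%:~R.
Proof.
rewrite /inorm sqr_sqrtr; last by apply: sumr_ge0 => i _; rewrite sqr_ge0.
rewrite rmorph_sum; apply: eq_bigr => i _; rewrite rmorphM expr2 //=.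
Qed.

Lemma inorm_ge0 (R : realType) d (j : idx d) : 0 <= inorm R j.
Proof. by rewrite /inorm sqrtr_ge0. Qed.

Lemma inorm_ge1 (R : realType) d (j : idx d) : j != 0 -> 1 <= inorm R j.
Proof.
move=> j0.
have [i ji] : exists i, j ord0 i != 0.
  apply/existsP; apply: contraR j0 => /existsPn H; apply/eqP/rowP => i.
  by rewrite mxE; apply/eqP; move: (H i); rewrite negbK.
have s1 : (1 <= \sum_(i0 < d) (j ord0 i0 * j ord0 i0))%R.
  rewrite (bigD1 i) //= -[1%R]addr0; apply: lerD; first exact: int_ge1.
  by apply: sumr_ge0 => k _; rewrite -expr2 sqr_ge0.
have : 1 <= inorm R j ^+ 2 by rewrite inorm_sq ler1z.
by rewrite -{1}(expr1n R 2) ler_pXn2r // ?nnegrE ?inorm_ge0.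
Qed.

Lemma inormN (R : realType) d (j : idx d) : inorm R (- j) = inorm R j.
Proof.
by rewrite /inorm; congr Num.sqrt; apply: eq_bigr => i _; rewrite !mxE rmorphN sqrrN.
Qed.

Lemma inorm_d1 (R : realType) (j : idx 1) : inorm R j = (`|j ord0 ord0|)%:~R.
Proof.
by rewrite /inorm big_ord1 sqrtr_sqr intr_norm.
Qed.

Lemma qd_int (R : realType) (x y : R) (p q : int) :
  x = p%:~R -> y = q%:~R -> `|qd x y| <= 1.
Proof.
move=> -> ->; rewrite /qd; case: eqP => [_|xy]; first by rewrite normr0 ler01.
have pq : p - q != 0.
  by apply: contra_not_neq xy => /eqP; rewrite subr_eq0 => /eqP ->.
have h1 := @intr_absge1 R _ pq; rewrite rmorphB /= in h1.
rewrite div1r normfV invf_le1 //; lra.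
Qed.

Lemma qd_gen (R : realType) (x y : R) (p q : int) :
  1 <= x -> 1 <= y -> x ^+ 2 = p%:~R -> y ^+ 2 = q%:~R -> `|qd x y| <= 3 * x.
Proof.
move=> x1 y1 hx hy; rewrite /qd; case: eqP => [_|xy]; first by rewrite normr0; lra.
have pq : p - q != 0.
  apply: contra_not_neq xy => /eqP; rewrite subr_eq0 => /eqP epq.
  have : (x - y) * (x + y) = 0 by rewrite -subr_sqr hx hy epq subrr.
  move/eqP; rewrite mulf_eq0 => /orP[/eqP h|/eqP h]; lra.
have h1 := @intr_absge1 R _ pq; rewrite rmorphB /= -hx -hy subr_sqr normrM in h1.
rewrite (ger0_norm (x := x + y)) in h1; last by lra.
have e0 : 0 < `|x - y| by rewrite normr_gt0 subr_eq0; apply/eqP.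
have key : 1 <= 3 * x * `|x - y|.
  case: (lerP y (2 * x)) => hyx.
    apply: (le_trans h1); nra.
  have : x <= `|x - y| by rewrite distrC ger0_norm; lra.
  nra.
rewrite div1r normfV -[X in X <= _]mul1r ler_pdivrMr //.
Qed.

Definition tt {R : realType} (d : nat) (x : R) : R := if d == 1%N then 1 else x.
Definition ww {R : realType} (d : nat) (x : R) : R := x ^+ 2 * tt d x.

Lemma tt_ge1 (R : realType) d (x : R) : 1 <= x -> 1 <= tt d x.
Proof. by rewrite /tt; case: ifP. Qed.

Lemma ww_ge0 (R : realType) d (x : R) : 1 <= x -> 0 <= ww d x.
Proof. move=> h; rewrite /ww mulr_ge0 ?sqr_ge0 //; have := @tt_ge1 R d x h; lra. Qed.

Lemma qd_inorm (R : realType) d (j k : idx d) : j != 0 -> k != 0 ->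
  `|qd (inorm R j) (inorm R k)| <= 3 * tt d (inorm R j).
Proof.
move=> j0 k0; rewrite /tt; case: eqP => [d1|_].
  subst d; rewrite !inorm_d1; apply: le_trans; first exact: qd_int.
  lra.
apply: qd_gen; [exact: inorm_ge1 | exact: inorm_ge1 | exact: inorm_sq | exact: inorm_sq].
Qed.

Lemma ww_pow (R : realType) d (x : R) : 0 <= x -> x `^ (2 * m0 R d) = ww d x.
Proof.
move=> x0; rewrite /ww /tt /m0; case: ifP => _.
  by rewrite !mulr1 powR_mulrn.
have -> : (2 : R) * (3%:R / 2%:R) = 3%:R by field.
by rewrite powR_mulrn // exprSr.
Qed.

Lemma B1 (R : realType) (a c q ta : R) : 1 <= a -> 1 <= c -> 1 <= ta -> `|q| <= 3 * ta ->
  `|a ^+ 2 * a ^+ 2 * (1 / (a + c) - q)| <= 10 * (a ^+ 2 * ta) * (a ^+ 2 * ta).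
Proof.
move=> a1 c1 t1 hq.
have h1 : `|1 / (a + c)| <= 1.
  rewrite div1r normfV invf_le1; rewrite ger0_norm; lra.
have h2 : `|1 / (a + c) - q| <= 10 * ta * ta.
  apply: (le_trans (ler_normB _ _)); nra.
rewrite normrM (ger0_norm (x := a ^+ 2 * a ^+ 2)) ?mulr_ge0 ?sqr_ge0 //.
have a2 : 0 <= a ^+ 2 * a ^+ 2 by rewrite mulr_ge0 ?sqr_ge0.
have -> : 10 * (a ^+ 2 * ta) * (a ^+ 2 * ta) = (a ^+ 2 * a ^+ 2) * (10 * ta * ta) by ring.
by apply: ler_wpM2l.
all: lra.
Qed.

Lemma B2 (R : realType) (a b ta tb : R) : 1 <= a -> 1 <= b -> 1 <= ta -> 1 <= tb ->
  `|a * b * (a + b)| <= 10 * (a ^+ 2 * ta) * (b ^+ 2 * tb).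
Proof.
move=> a1 b1 t1 t2; rewrite ger0_norm; last by rewrite !mulr_ge0 //; lra.
have hab : a + b <= 2 * (a * b) by nra.
have h : a * b * (a + b) <= 2 * (a ^+ 2 * b ^+ 2).
  have -> : 2 * (a ^+ 2 * b ^+ 2) = a * b * (2 * (a * b)) by ring.
  by apply: ler_wpM2l => //; rewrite mulr_ge0 //; lra.
apply: (le_trans h).
have h3 : a ^+ 2 * b ^+ 2 <= (a ^+ 2 * ta) * (b ^+ 2 * tb).
  have -> : (a ^+ 2 * ta) * (b ^+ 2 * tb) = (a ^+ 2 * b ^+ 2) * (ta * tb) by ring.
  rewrite ler_peMr ?mulr_ge0 ?sqr_ge0 //; nra.
have : 0 <= a ^+ 2 * b ^+ 2 by rewrite mulr_ge0 ?sqr_ge0.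
lra.
Qed.

Lemma B3 (R : realType) (a b q ta tb : R) : 1 <= a -> 1 <= b -> 1 <= ta -> 1 <= tb ->
  `|q| <= 3 * tb ->
  `|a ^+ 2 * b * (6%:R + b / (b + a) + b * q)| <= 10 * (a ^+ 2 * ta) * (b ^+ 2 * tb).
Proof.
move=> a1 b1 t1 t2 hq.
have hf : `|b / (b + a)| <= 1.
  rewrite normf_div !ger0_norm; try lra.
  by rewrite ler_pdivrMr; lra.
have hbq : `|b * q| <= 3 * b * tb by rewrite normrM ger0_norm; nra.
have btb : 1 <= b * tb by nra.
have hs : `|6%:R + b / (b + a) + b * q| <= 10 * b * tb.
  have h6 : `|(6%:R : R) + b / (b + a)| <= 7.
    apply: (le_trans (ler_normD _ _)); rewrite (ger0_norm (x := 6%:R)) //; lra.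
  apply: (le_trans (ler_normD _ _)); lra.
rewrite normrM ger0_norm; last by rewrite mulr_ge0 ?sqr_ge0 //; lra.
have p0 : 0 <= a ^+ 2 * b by rewrite mulr_ge0 ?sqr_ge0 //; lra.
apply: (le_trans (ler_wpM2l p0 hs)).
have -> : a ^+ 2 * b * (10 * b * tb) = 10 * (a ^+ 2 * b ^+ 2 * tb) by ring.
have -> : 10 * (a ^+ 2 * ta) * (b ^+ 2 * tb) = 10 * (a ^+ 2 * b ^+ 2 * tb) * ta by ring.
have ab2 : 0 <= a ^+ 2 * b ^+ 2 := mulr_ge0 (sqr_ge0 a) (sqr_ge0 b).
have tb0 : 0 <= tb by lra.
have h0 : 0 <= 10 * (a ^+ 2 * b ^+ 2 * tb) by apply: mulr_ge0 => //; apply: mulr_ge0.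
by rewrite ler_peMr.
Qed.

Lemma B4 (R : realType) (a b c ta tb : R) : 1 <= a -> 1 <= b -> 1 <= c -> 1 <= ta -> 1 <= tb ->
  c = a - b -> `|a * b * c| <= 10 * (a ^+ 2 * ta) * (b ^+ 2 * tb).
Proof.
move=> a1 b1 c1 t1 t2 hc.
have ab0 : 0 <= a * b by apply: mulr_ge0; lra.
rewrite ger0_norm; last by apply: mulr_ge0 => //; lra.
have h1 : a * b * c <= a * b * (a + b) by apply: ler_wpM2l => //; lra.
have := @B2 R a b ta tb a1 b1 t1 t2; rewrite ger0_norm; last by apply: mulr_ge0 => //; lra.
lra.
Qed.


Definition Sset d : set (idx d) := [set j : idx d | j != 0].
Definition GG {R : realType} {d : nat} (x y : fcoef R d) (j : idx d) : R :=
  nc (x j) * nc (y (- j)) * ww d (inorm R j).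

Lemma GG_ge0 (R : realType) d (x y : fcoef R d) j : j != 0 -> 0 <= GG x y j.
Proof.
move=> j0; have t1 := @tt_ge1 R d _ (@inorm_ge1 R d j j0).
by rewrite /GG !mulr_ge0 ?nc_ge0 ?inorm_ge0 //; lra.
Qed.

Lemma pairsum_le (R : realType) d (P : set (idx d * idx d)) (f : idx d * idx d -> R[i])
    (g h : idx d -> R) (c M : R) :
  (P `<=` Sset d `*` Sset d)%classic ->
  (forall p, P p -> nc (f p) <= c * g p.1 * h p.2) -> 0 <= c ->
  (forall x, 0 <= g x) -> (forall x, 0 <= h x) ->
  (\esum_(x in Sset d) (g x)%:E <= M%:E)%E -> (\esum_(x in Sset d) (h x)%:E <= M%:E)%E ->
  nc (csum P f) <= 4 * (c * M * M).
Proof.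
move=> PS hf c0 g0 h0 hg hh; apply: csum_le.
apply: (@le_trans _ _ (\esum_(p in P) (c * g p.1 * h p.2)%:E)%E).
  by apply: le_esum => p Pp; rewrite lee_fin hf.
apply: (@le_trans _ _ (\esum_(p in (Sset d `*` Sset d)%classic) (c * g p.1 * h p.2)%:E)%E).
  by apply: esum_subset_le => // p _; rewrite lee_fin !mulr_ge0.
exact: esum_prod_le.
Qed.

Lemma term_bound (R : realType) (z1 z2 z3 z4 z5 : R[i]) (r K : R) :
  `|r| <= K -> nc (z1 * z2 * z3 * z4 * z5 * r%:C) <= (nc z1 * nc z2 * nc z3 * nc z4 * nc z5) * K.
Proof.
move=> h; rewrite !Normc.normcM nc_real; apply: ler_wpM2l => //.
by rewrite !mulr_ge0 ?nc_ge0.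
Qed.

Lemma nc_nat (R : realType) n : nc (n%:R : R[i]) = n%:R.
Proof. by rewrite -(rmorph_nat (real_complex R)) nc_real ger0_norm. Qed.

Lemma ncc (R : realType) (a b : nat) : nc (a%:R * 'i / b%:R : R[i]) = a%:R / b%:R.
Proof. by rewrite !Normc.normcM Normc.normcV !nc_nat nc_i mulr1. Qed.


Lemma GG_ge0' (R : realType) d (x y : fcoef R d) j : 0 <= GG x y j.
Proof.
rewrite /GG /ww /tt !mulr_ge0 ?nc_ge0 ?inorm_ge0 //; case: ifP => // _; exact: inorm_ge0.
Qed.

Lemma cst_le (R : realType) (c S : R[i]) : nc c <= 1 -> nc (c * S) <= nc S.
Proof.
move=> h; rewrite Normc.normcM; have := @nc_ge0 R S; nra.
Qed.

Lemma comb (R : realType) (S1 S2 S3 S4 : R[i]) (X Y M : R) :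
  0 <= X -> 0 <= Y ->
  nc S1 <= 4 * (10 * X * M * M) -> nc S2 <= 4 * (10 * Y * M * M) ->
  nc S3 <= 4 * (10 * Y * M * M) -> nc S4 <= 4 * (10 * Y * M * M) ->
  nc ('i / 32%:R * S1 + 3%:R * 'i / 32%:R * S2 + 'i / 16%:R * S3 + 3%:R * 'i / 16%:R * S4)
   <= 160 * (M * M) * (X + Y).
Proof.
move=> X0 Y0 h1 h2 h3 h4.
have c1 : forall a b : nat, (a <= b)%N -> (0 < b)%N -> nc (a%:R * 'i / b%:R : R[i]) <= 1.
  move=> a b ab b0; rewrite ncc ler_pdivrMr ?ltr0n // mul1r ler_nat //.
have e1 : forall (b : nat) (S : R[i]), ('i / b%:R * S) = (1%:R * 'i / b%:R) * S.
  by move=> b S; rewrite mul1r.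
rewrite e1 (e1 16%N).
have MM : 0 <= M * M by rewrite -expr2 sqr_ge0.
have XM : 0 <= X * (M * M) by rewrite mulr_ge0.
have YM : 0 <= Y * (M * M) by rewrite mulr_ge0.
have k1 := @cst_le R _ S1 (c1 1%N 32%N isT isT).
have k2 := @cst_le R _ S2 (c1 3%N 32%N isT isT).
have k3 := @cst_le R _ S3 (c1 1%N 16%N isT isT).
have k4 := @cst_le R _ S4 (c1 3%N 16%N isT isT).
apply: (le_trans (le_normcD _ _)).
have := le_normcD (1%:R * 'i / 32%:R * S1 + 3%:R * 'i / 32%:R * S2) (1%:R * 'i / 16%:R * S3).
have := le_normcD (1%:R * 'i / 32%:R * S1) (3%:R * 'i / 32%:R * S2).
nra.
Qed.

Lemma eqle (R : realType) (x y : R) : x = y -> x <= y.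
Proof. by move=> ->. Qed.

Lemma W51_le (R : realType) d (u v : fcoef R d) (M : R) (k : idx d) :
  0 <= M ->
  (\esum_(x in Sset d) (GG u u x)%:E <= M%:E)%E ->
  (\esum_(x in Sset d) (GG v v x)%:E <= M%:E)%E ->
  (\esum_(x in Sset d) (GG u v x)%:E <= M%:E)%E ->
  k != 0 ->
  nc (W51 u v k) <= 160 * (M * M) * (nc (u k) + nc (v k)).
Proof.
move=> M0 Huu Hvv Huv k0.
have k1 := @inorm_ge1 R d k k0.
rewrite /W51 (negbTE k0); cbv beta zeta.
apply: comb; [exact: nc_ge0 | exact: nc_ge0 | | | |].
- apply: (@pairsum_le R d _ _ (GG u u) (GG v v) (10 * nc (u k)) M _ _ _ (@GG_ge0' R d u u) (@GG_ge0' R d v v) Huu Hvv);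
    last by rewrite mulr_ge0 ?nc_ge0.
    by move=> p [? [? _]].
  move=> [j l] /= [j0 [l0 e]].
  have j1 := @inorm_ge1 R d j j0.
  have t1 := @tt_ge1 R d _ j1.
  rewrite -e.
  apply: le_trans; first apply: term_bound.
    apply: (@B1 R (inorm R j) (inorm R k) _ (tt d (inorm R j))) => //.
    exact: qd_inorm.
  by apply: eqle; rewrite /GG -e /ww; ring.
- apply: (@pairsum_le R d _ _ (GG u u) (GG u u) (10 * nc (v k)) M _ _ _ (@GG_ge0' R d u u) (@GG_ge0' R d u u) Huu Huu);
    last by rewrite mulr_ge0 ?nc_ge0.
    by move=> p [? [? _]].
  move=> [j l] /= [j0 [l0 e]].
  have j1 := @inorm_ge1 R d j j0.
  have l1 := @inorm_ge1 R d l l0.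
  rewrite e.
  apply: le_trans; first apply: term_bound.
    apply: (@B2 R (inorm R j) (inorm R l) (tt d (inorm R j)) (tt d (inorm R l))) => //;
    exact: tt_ge1.
  by apply: eqle; rewrite /GG /ww; ring.
- apply: (@pairsum_le R d _ _ (GG u u) (GG u v) (10 * nc (v k)) M _ _ _ (@GG_ge0' R d u u) (@GG_ge0' R d u v) Huu Huv);
    last by rewrite mulr_ge0 ?nc_ge0.
    by move=> p [? [? _]].
  move=> [j l] /= [j0 [l0 e]].
  have j1 := @inorm_ge1 R d j j0.
  have l1 := @inorm_ge1 R d l l0.
  apply: le_trans; first apply: term_bound.
    apply: (@B3 R (inorm R j) (inorm R l) _ (tt d (inorm R j)) (tt d (inorm R l))) => //;
      try exact: tt_ge1.
    exact: qd_inorm.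
  by apply: eqle; rewrite /GG /ww; ring.
- apply: (@pairsum_le R d _ _ (GG u u) (GG v v) (10 * nc (v k)) M _ _ _ (@GG_ge0' R d u u) (@GG_ge0' R d v v) Huu Hvv);
    last by rewrite mulr_ge0 ?nc_ge0.
    by move=> p [? [? _]].
  move=> [j l] /= [j0 [l0 e]].
  have j1 := @inorm_ge1 R d j j0.
  have l1 := @inorm_ge1 R d l l0.
  apply: le_trans; first apply: term_bound.
    apply: (@B4 R (inorm R j) (inorm R l) (inorm R k) (tt d (inorm R j)) (tt d (inorm R l))) => //;
    exact: tt_ge1.
  by apply: eqle; rewrite /GG /ww; ring.
Qed.


Lemma esum_neg (R : realType) d (g : idx d -> \bar R) :
  (\esum_(j in Sset d) g (- j)%R = \esum_(j in Sset d) g j)%E.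
Proof.
symmetry; apply: (@reindex_esum R _ _ (Sset d) (Sset d) (fun j => - j)).
split.
- by move=> x; rewrite /Sset /= oppr_eq0.
- by move=> x y _ _; apply: oppr_inj.
- move=> y Sy; exists (- y); last by rewrite opprK.
  by move: Sy; rewrite /Sset /= oppr_eq0.
Qed.

Lemma W52_le (R : realType) d (u v : fcoef R d) (M : R) (k : idx d) :
  0 <= M ->
  (\esum_(x in Sset d) (GG u u x)%:E <= M%:E)%E ->
  (\esum_(x in Sset d) (GG v v x)%:E <= M%:E)%E ->
  (\esum_(x in Sset d) (GG v u x)%:E <= M%:E)%E ->
  k != 0 ->
  nc (W52 u v k) <= 160 * (M * M) * (nc (u k) + nc (v k)).
Proof.
move=> M0 Huu Hvv Hvu k0; rewrite /W52 normcN addrC; exact: W51_le.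
Qed.

Lemma Hnorm_fin (R : realType) d (s : R) (u : fcoef R d) :
  (Hnorm s u < +oo)%E -> exists N, 0 <= N /\ Hnorm2 s u = N%:E /\ Hnorm s u = (Num.sqrt N)%:E.
Proof.
have : (0 <= Hnorm2 s u)%E.
  apply: esum_ge0 => j _; rewrite lee_fin mulr_ge0 ?sqr_ge0 // powR_ge0 //.
rewrite /Hnorm; case: (Hnorm2 s u) => [r||] //= r0 _.
by exists r; split.
Qed.


Lemma Hnorm2_cconj (R : realType) d (s : R) (u : fcoef R d) :
  Hnorm2 s (cconj u) = Hnorm2 s u.
Proof.
rewrite /Hnorm2 -(@esum_neg R d (fun j => ((Normc.normc (u j)) ^+ 2 * (inorm R j) `^ (2 * s))%:E)).
by apply: eq_esum => j _; rewrite /cconj nc_conj inormN.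
Qed.

Definition TT {R : realType} {d : nat} (u : fcoef R d) (j : idx d) : R :=
  nc (u j) ^+ 2 * ww d (inorm R j).

Lemma GG_cc (R : realType) d (u : fcoef R d) (x y : fcoef R d) j :
  (x = u \/ x = cconj u) -> (y = u \/ y = cconj u) ->
  GG x y j <= TT u j + TT u (- j).
Proof.
have w0 : 0 <= ww d (inorm R j).
  by rewrite /ww /tt mulr_ge0 ?sqr_ge0 //; case: ifP => // _; exact: inorm_ge0.
rewrite /GG /TT inormN.
have a0 := @nc_ge0 R (u j); have b0 := @nc_ge0 R (u (- j)).
have key : forall p : R, 0 <= p -> p <= nc (u j) ^+ 2 + nc (u (- j)) ^+ 2 ->
   p * ww d (inorm R j) <= nc (u j) ^+ 2 * ww d (inorm R j) + nc (u (- j)) ^+ 2 * ww d (inorm R j).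
  by move=> p p0 hp; rewrite -mulrDl ler_wpM2r.
move=> [->|->] [->|->]; rewrite /cconj ?opprK ?nc_conj; apply: key;
  rewrite ?mulr_ge0 //; nra.
Qed.

Lemma GG_cc_esum (R : realType) d (u : fcoef R d) (x y : fcoef R d) (N : R) :
  (x = u \/ x = cconj u) -> (y = u \/ y = cconj u) ->
  (\esum_(j in Sset d) (TT u j)%:E = N%:E)%E ->
  (\esum_(j in Sset d) (GG x y j)%:E <= (N + N)%:E)%E.
Proof.
move=> hx hy hN.
have T0 : forall j, 0 <= TT u j.
  move=> j; have w0 : 0 <= ww d (inorm R j).
    by rewrite /ww /tt mulr_ge0 ?sqr_ge0 //; case: ifP => // _; exact: inorm_ge0.
  by rewrite /TT mulr_ge0 ?sqr_ge0.
apply: (@le_trans _ _ (\esum_(j in Sset d) ((TT u j)%:E + (TT u (- j))%:E))%E).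
  by apply: le_esum => j _; rewrite -EFinD lee_fin GG_cc.
rewrite esumD; last 2 first.
- by move=> j _; rewrite lee_fin.
- by move=> j _; rewrite lee_fin.
by rewrite (@esum_neg R d (fun j => (TT u j)%:E)) hN.
Qed.


Lemma Hnorm_W (R : realType) d (s : R) (W u v : fcoef R d) (B Ns : R) :
  0 <= B -> 0 <= Ns ->
  (forall k, k != 0 -> nc (W k) <= B * (nc (u k) + nc (v k))) ->
  Hnorm2 s u = Ns%:E -> Hnorm2 s v = Ns%:E ->
  (Hnorm s W <= (2 * B * Num.sqrt Ns)%:E)%E.
Proof.
move=> B0 N0 hW hu hv.
have p0 : forall k : idx d, 0 <= inorm R k `^ (2 * s) by move=> k; exact: powR_ge0.
have h2 : (Hnorm2 s W <= ((2 * (B * B)) * (Ns + Ns))%:E)%E.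
  rewrite /Hnorm2.
  apply: (@le_trans _ _ (\esum_(k in Sset d) ((2 * (B * B))%:E *
      ((nc (u k) ^+ 2 * inorm R k `^ (2 * s))%:E + (nc (v k) ^+ 2 * inorm R k `^ (2 * s))%:E)))%E).
    apply: le_esum => k k0; rewrite -EFinD -EFinM lee_fin.
    have := hW k k0; have := @nc_ge0 R (W k); have := @nc_ge0 R (u k); have := @nc_ge0 R (v k).
    have := p0 k; set P := inorm R k `^ (2 * s); set a := nc (W k); set x := nc (u k); set y := nc (v k).
    move=> P0 y0 x0 a0 ha.
    have h1 : a ^+ 2 <= 2 * (B * B) * (x ^+ 2 + y ^+ 2).
      have : a ^+ 2 <= (B * (x + y)) ^+ 2 by rewrite ler_sqr // ?nnegrE //; nra.
      have : (B * (x + y)) ^+ 2 <= 2 * (B * B) * (x ^+ 2 + y ^+ 2).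
        rewrite -subr_ge0.
        have -> : 2 * (B * B) * (x ^+ 2 + y ^+ 2) - (B * (x + y)) ^+ 2 = (B * (x - y)) ^+ 2 by ring.
        exact: sqr_ge0.
      lra.
    have -> : 2 * (B * B) * (x ^+ 2 * P + y ^+ 2 * P) = (2 * (B * B) * (x ^+ 2 + y ^+ 2)) * P by ring.
    exact: ler_wpM2r.
  apply: le_trans; first apply: (esumZ_le (Sset d)).
  - by rewrite mulr_ge0 // mulr_ge0.
  - by move=> k; rewrite adde_ge0 // lee_fin mulr_ge0 ?sqr_ge0.
  rewrite esumD; last 2 first.
  - by move=> k _; rewrite lee_fin mulr_ge0 ?sqr_ge0.
  - by move=> k _; rewrite lee_fin mulr_ge0 ?sqr_ge0.
  by rewrite -/(Hnorm2 s u) -/(Hnorm2 s v) hu hv.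
have g0 : (0 <= Hnorm2 s W)%E.
  apply: esum_ge0 => j _; rewrite lee_fin mulr_ge0 ?sqr_ge0 //.
move: h2 g0; rewrite /Hnorm; case: (Hnorm2 s W) => [r||] //=; rewrite !lee_fin => hr r0.
apply: (le_trans (ler_wsqrtr hr)).
have -> : 2 * (B * B) * (Ns + Ns) = (2 * B) ^+ 2 * Ns by ring.
by rewrite sqrtrM ?sqr_ge0 // sqrtr_sqr ger0_norm // mulr_ge0.
Qed.


Theorem lemma5p2 (R : realType) (d : nat) (hd : (0 < d)%N) :
  exists C : R, forall (s : R) (u : fcoef R d),
    0 <= s ->
    u 0 = 0 ->
    (Hnorm s u < +oo)%E ->
    (Hnorm (m0 R d) u < +oo)%E ->
    (Hnorm s (W51 u (cconj u)) + Hnorm s (W52 u (cconj u))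
       <= C%:E * (Hnorm (m0 R d) u) ^+ 4 * Hnorm s u)%E.
Proof.
exists 2560 => s u s0 u0 Hs Hm.
have [Ns [Ns0 [Hs2 Hs1]]] := @Hnorm_fin R d s u Hs.
have [N [N0 [Hm2 Hm1]]] := @Hnorm_fin R d (m0 R d) u Hm.
set v := cconj u.
have hTT : (\esum_(j in Sset d) (TT u j)%:E = N%:E)%E.
  rewrite -Hm2 /Hnorm2; apply: eq_esum => j _.
  by rewrite /TT ww_pow // inorm_ge0.
have M0 : 0 <= N + N by lra.
have Huu := @GG_cc_esum R d u u u N (or_introl erefl) (or_introl erefl) hTT.
have Hvv := @GG_cc_esum R d u v v N (or_intror erefl) (or_intror erefl) hTT.
have Huv := @GG_cc_esum R d u u v N (or_introl erefl) (or_intror erefl) hTT.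
have Hvu := @GG_cc_esum R d u v u N (or_intror erefl) (or_introl erefl) hTT.
set B := 160 * ((N + N) * (N + N)).
have B0 : 0 <= B by rewrite /B mulr_ge0 // mulr_ge0.
have b1 : forall k, k != 0 -> nc (W51 u v k) <= B * (nc (u k) + nc (v k)).
  by move=> k k0; exact: (@W51_le R d u v (N + N) k M0 Huu Hvv Huv k0).
have b2 : forall k, k != 0 -> nc (W52 u v k) <= B * (nc (u k) + nc (v k)).
  by move=> k k0; exact: (@W52_le R d u v (N + N) k M0 Huu Hvv Hvu k0).
have Hv2 : Hnorm2 s v = Ns%:E by rewrite /v Hnorm2_cconj.
have e1 := @Hnorm_W R d s (W51 u v) u v B Ns B0 Ns0 b1 Hs2 Hv2.
have e2 := @Hnorm_W R d s (W52 u v) u v B Ns B0 Ns0 b2 Hs2 Hv2.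
rewrite Hm1 Hs1.
apply: (le_trans (leeD e1 e2)).
rewrite -EFinD -EFin_expe -!EFinM lee_fin.
have -> : Num.sqrt N ^+ 4 = N * N.
  by rewrite -[4%N]/(2 * 2)%N exprM sqr_sqrtr // expr2.
by apply: eqle; rewrite /B; ring.
Qed.
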